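(* Let $(\mathcal M_i,\phi_{ij})$ be an inverse system of local Moufang sets over a directed set $(I,\succcurlyeq)$, with $\mathcal M_i$ acting on $(X_i,\sim)$, such that every $\phi_{ij}$ is surjective, and assume $I$ has a cofinal sequence. Let $L:=\{(x_i)\in\prod_iX_i\mid x_i\phi_{ij}=x_j\ \forall i\succcurlyeq j\}$. Then every projection $p_j:L\to X_j$, $(x_i)\mapsto x_j$, is surjective; $L$ has more than two classes for the relation $(x_i)\sim(y_i)\iff x_i\sim y_i$ for some (equivalently all) $i$; and hence the inverse limit of $(\mathcal M_i,\phi_{ij})$ exists in the category of local Moufang sets.
   Context: Group actions are right actions; maps composed left to right. For $(X,\sim)$, $\overline x$ is the class of $x$, $\overline X$ the set of classes, $\mathrm{Sym}(X,\sim)$ the bijections $g$ with $x\sim y\iff xg\sim yg$, $\overline U$ the induced group on $\overline X$. A local Moufang set is $(X,\sim)$ with $|\overline X|>2$ and subgroups $U_x\le\mathrm{Sym}(X,\sim)$ ($x\in X$) with: (LM0) $x\sim y\Rightarrow\overline{U_x}=\overline{U_y}$; (LM1) $U_x$ fixes $x$ and is sharply transitive on $X\setminus\overline x$; (LM1') $\overline{U_x}$ fixes $\overline x$ and is sharply transitive on $\overline X\setminus\{\overline x\}$; (LM2) $U_x^g=U_{xg}$ for all $x$ and all $g\in\langle U_y\rangle$, where $g^h=h^{-1}gh$. A homomorphism $(X,(U_x))\to(Y,(V_y))$ is a map $\phi:X\to Y$ with $x\sim x'\iff x\phi\sim x'\phi$ and $U_x\phi\subseteq\phi V_{x\phi}$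 for all $x$ (i.e. each $u\in U_x$ has $v\in V_{x\phi}$ with $u\phi=\phi v$); the category of local Moufang sets has these as objects/morphisms, and an inverse limit is a limit in this category of the functor given by the system. A directed set is a nonempty poset in which any two elements have a common upper bound; it has a cofinal sequence if there are $i_1\preccurlyeq i_2\preccurlyeq\cdots$ in $I$ such that every $i\in I$ satisfies $i\preccurlyeq i_\ell$ for some $\ell$. An inverse system over $I$: local Moufang sets $\mathcal M_i$ and homomorphisms $\phi_{ij}:\mathcal M_i\to\mathcal M_j$ ($i\succcurlyeq j$) with $\phi_{ii}=\mathrm{id}$, $\phi_{jk}\circ\phi_{ij}=\phi_{ik}$. *)

(* Defs.v *)
From Stdlib Require Import Classical FunctionalExtensionality.

Set Implicit Arguments.

(* Conventions: permutations are functions X -> X; the right action x g is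
   written (g x).  Products are composed left to right: g h := fun z => h (g z). *)

Definition equivalence {X : Type} (sim : X -> X -> Prop) : Prop :=
  (forall x, sim x x) /\ (forall x y, sim x y -> sim y x) /\
  (forall x y z, sim x y -> sim y z -> sim x z).

Definition more_than_two_classes {X : Type} (sim : X -> X -> Prop) : Prop :=
  exists a b c : X, ~ sim a b /\ ~ sim a c /\ ~ sim b c.

Definition preserves_sim {X : Type} (sim : X -> X -> Prop) (g : X -> X) : Prop :=
  forall x y, sim x y <-> sim (g x) (g y).

(* G is a subgroup of Sym(X,~) (bijectivity follows from having an inverse in G) *)
Definition subgroup_Sym {X : Type} (sim : X -> X -> Prop) (G : (X -> X) -> Prop) : Prop :=
  G (fun z => z) /\
  (forall g h, G g -> G h -> G (fun z => h (g z))) /\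
  (forall g, G g -> exists h, G h /\ (forall z, h (g z) = z /\ g (h z) = z)) /\
  (forall g, G g -> preserves_sim sim g).

(* The group < U_y | y in X > generated by all root groups: finite products of
   elements of the U_y (each U_y being a group, this is closed under inverses). *)
Inductive gen_group {X : Type} (U : X -> (X -> X) -> Prop) : (X -> X) -> Prop :=
| gen_id : gen_group U (fun z => z)
| gen_mul : forall y u g, U y u -> gen_group U g -> gen_group U (fun z => g (u z)).

Definition is_LMS {X : Type} (sim : X -> X -> Prop) (U : X -> (X -> X) -> Prop) : Prop :=
  equivalence sim /\
  more_than_two_classes sim /\
  (forall x, subgroup_Sym sim (U x)) /\
  (* LM0: x ~ y -> induced groups on X/~ coincide *)
  (forall x y, sim x y ->
     (forall u, U x u -> exists v, U y v /\ forall z, sim (u z) (v z)) /\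
     (forall v, U y v -> exists u, U x u /\ forall z, sim (u z) (v z))) /\
  (forall x u, U x u -> u x = x) /\
  (forall x y z, ~ sim x y -> ~ sim x z ->
     exists u, U x u /\ u y = z /\
       forall u', U x u' -> u' y = z -> forall w, u' w = u w) /\
  (forall x u, U x u -> sim (u x) x) /\
  (forall x y z, ~ sim x y -> ~ sim x z ->
     exists u, U x u /\ sim (u y) z /\
       forall u', U x u' -> sim (u' y) z -> forall w, sim (u' w) (u w)) /\
  (* LM2: U_x^g = U_{xg} for g in <U_y>, with U_x^g = g^-1 U_x g *)
  (forall x g ginv, gen_group U g ->
     (forall z, ginv (g z) = z /\ g (ginv z) = z) ->
     forall u, U (g x) u <-> exists v, U x v /\ forall z, u z = g (v (ginv z))).

Definition is_LMS_hom {X Y : Type} (simX : X -> X -> Prop) (U : X -> (X -> X) -> Prop)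
  (simY : Y -> Y -> Prop) (V : Y -> (Y -> Y) -> Prop) (f : X -> Y) : Prop :=
  (forall x x', simX x x' <-> simY (f x) (f x')) /\
  (forall x u, U x u -> exists v, V (f x) v /\ forall z, f (u z) = v (f z)).

Definition directed_set {I : Type} (le : I -> I -> Prop) : Prop :=
  (exists i : I, True) /\
  (forall i, le i i) /\
  (forall i j, le i j -> le j i -> i = j) /\
  (forall i j k, le i j -> le j k -> le i k) /\
  (forall i j, exists k, le i k /\ le j k).

Definition has_cofinal_sequence {I : Type} (le : I -> I -> Prop) : Prop :=
  exists s : nat -> I, (forall n, le (s n) (s (S n))) /\ (forall i, exists n, le i (s n)).

Definition inverse_system {I : Type} (le : I -> I -> Prop) (X : I -> Type)
  (sim : forall i, X i -> X i -> Prop) (U : forall i, X i -> (X i -> X i) -> Prop)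
  (phi : forall i j, le j i -> X i -> X j) : Prop :=
  (forall i, is_LMS (sim i) (U i)) /\
  (forall i j (H : le j i), is_LMS_hom (sim i) (U i) (sim j) (U j) (phi i j H)) /\
  (forall i (H : le i i) x, phi i i H x = x) /\
  (forall i j k (Hij : le j i) (Hjk : le k j) (Hik : le k i) x,
     phi j k Hjk (phi i j Hij x) = phi i k Hik x).

Definition is_cone {I : Type} (le : I -> I -> Prop) (X : I -> Type)
  (sim : forall i, X i -> X i -> Prop) (U : forall i, X i -> (X i -> X i) -> Prop)
  (phi : forall i j, le j i -> X i -> X j)
  {Z : Type} (simZ : Z -> Z -> Prop) (W : Z -> (Z -> Z) -> Prop)
  (psi : forall i, Z -> X i) : Prop :=
  is_LMS simZ W /\
  (forall i, is_LMS_hom simZ W (sim i) (U i) (psi i)) /\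
  (forall i j (H : le j i) z, phi i j H (psi i z) = psi j z).

Definition inverse_limit_exists {I : Type} (le : I -> I -> Prop) (X : I -> Type)
  (sim : forall i, X i -> X i -> Prop) (U : forall i, X i -> (X i -> X i) -> Prop)
  (phi : forall i j, le j i -> X i -> X j) : Prop :=
  exists (Y : Type) (simY : Y -> Y -> Prop) (V : Y -> (Y -> Y) -> Prop)
         (pi : forall i, Y -> X i),
    is_cone le X sim U phi simY V pi /\
    forall (Z : Type) (simZ : Z -> Z -> Prop) (W : Z -> (Z -> Z) -> Prop)
           (psi : forall i, Z -> X i),
      is_cone le X sim U phi simZ W psi ->
      exists theta : Z -> Y,
        is_LMS_hom simZ W simY V theta /\
        (forall i z, pi i (theta z) = psi i z) /\
        (forall theta' : Z -> Y, is_LMS_hom simZ W simY V theta' ->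
           (forall i z, pi i (theta' z) = psi i z) -> forall z, theta' z = theta z).

(* Main.v *)
Require Import Defs.
From Stdlib Require Import Classical FunctionalExtensionality ClassicalEpsilon ProofIrrelevance Lia PeanoNat Arith.

Section Generic.
Context {T : Type} (s : T -> T -> Prop) (V : T -> (T -> T) -> Prop) (hL : is_LMS s V).

Lemma g_refl x : s x x.
Proof. destruct hL as [[h _] _]. apply h. Qed.
Lemma g_sym x y : s x y -> s y x.
Proof. destruct hL as [[_ [h _]] _]. apply h. Qed.
Lemma g_trans x y z : s x y -> s y z -> s x z.
Proof. destruct hL as [[_ [_ h]] _]. apply h. Qed.
Lemma g_three : more_than_two_classes s.
Proof. apply hL. Qed.
Lemma g_sub x : subgroup_Sym s (V x).
Proof. apply hL. Qed.
Lemma g_id x : V x (fun z => z).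
Proof. apply g_sub. Qed.
Lemma g_mul x g h : V x g -> V x h -> V x (fun z => h (g z)).
Proof. apply g_sub. Qed.
Lemma g_inv x g : V x g -> exists h, V x h /\ (forall z, h (g z) = z /\ g (h z) = z).
Proof. apply g_sub. Qed.
Lemma g_pres x g : V x g -> forall a b, s a b <-> s (g a) (g b).
Proof. apply g_sub. Qed.
Lemma g_LM0 x y : s x y -> forall u, V x u -> exists v, V y v /\ forall z, s (u z) (v z).
Proof. intros h. apply (proj1 (proj2 (proj2 (proj2 hL))) x y h). Qed.
Lemma g_fix x u : V x u -> u x = x.
Proof. apply hL. Qed.
Lemma g_sharp x y z : ~ s x y -> ~ s x z ->
     exists u, V x u /\ u y = z /\
       forall u', V x u' -> u' y = z -> forall w, u' w = u w.
Proof. apply hL. Qed.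
Lemma g_sharp' x y z : ~ s x y -> ~ s x z ->
     exists u, V x u /\ s (u y) z /\
       forall u', V x u' -> s (u' y) z -> forall w, s (u' w) (u w).
Proof. apply hL. Qed.
Lemma g_LM2 x g ginv : gen_group V g ->
     (forall z, ginv (g z) = z /\ g (ginv z) = z) ->
     forall u, V (g x) u <-> exists v, V x v /\ forall z, u z = g (v (ginv z)).
Proof. apply hL. Qed.

Lemma g_nsim x : exists z, ~ s x z.
Proof.
  destruct g_three as [a [b [c [h1 [h2 h3]]]]].
  destruct (classic (s x a)) as [ha|ha]; [|eauto].
  exists b. intro hb. apply h1. apply g_trans with x; [apply g_sym|]; auto.
Qed.

Definition canon (a b c : T) : T -> T :=
  epsilon (inhabits (fun z : T => z)) (fun u => V a u /\ u b = c).

Lemma canon_spec a b c : ~ s a b -> ~ s a c -> V a (canon a b c) /\ canon a b c b = c.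
Proof.
  intros h1 h2. unfold canon. apply epsilon_spec.
  destruct (g_sharp a b c h1 h2) as [u [hu [hu2 _]]]. eauto.
Qed.

Lemma canon_uniq a b c u : ~ s a b -> ~ s a c -> V a u -> u b = c ->
  forall w, u w = canon a b c w.
Proof.
  intros h1 h2 hu hb w.
  destruct (g_sharp a b c h1 h2) as [u0 [_ [_ hun]]].
  destruct (canon_spec a b c h1 h2) as [hc1 hc2].
  rewrite (hun u hu hb w), (hun _ hc1 hc2 w). reflexivity.
Qed.

Lemma g_gen_inv g : gen_group V g -> exists h, forall z, h (g z) = z /\ g (h z) = z.
Proof.
  induction 1 as [|y u g hu hg [h hh]].
  - exists (fun z => z). auto.
  - destruct (g_inv y u hu) as [ui [_ hui]].
    exists (fun z => ui (h z)). intro z. split.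
    + rewrite (proj1 (hh (u z))). apply hui.
    + rewrite (proj2 (hui (h z))). apply hh.
Qed.

End Generic.


Section Main.
Variables (I : Type) (le : I -> I -> Prop) (X : I -> Type)
  (sim : forall i, X i -> X i -> Prop) (U : forall i, X i -> (X i -> X i) -> Prop)
  (phi : forall i j, le j i -> X i -> X j).
Hypotheses (hdir : directed_set le)
  (hsys : inverse_system le X sim U phi)
  (hsurj : forall i j (H : le j i) (y : X j), exists x : X i, phi i j H x = y)
  (hcof : has_cofinal_sequence le).

Definition Lc (x : forall i, X i) : Prop := forall i j (H : le j i), phi i j H (x i) = x j.
Definition comp_fam (u : forall i, X i -> X i) : Prop :=
  forall i j (H : le j i) w, phi i j H (u i w) = u j (phi i j H w).

Lemma LMSi i : is_LMS (sim i) (U i).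
Proof. apply hsys. Qed.
Lemma homij i j (H : le j i) : is_LMS_hom (sim i) (U i) (sim j) (U j) (phi i j H).
Proof. apply hsys. Qed.
Lemma phi_comp i j k (Hij : le j i) (Hjk : le k j) (Hik : le k i) x :
  phi j k Hjk (phi i j Hij x) = phi i k Hik x.
Proof. apply hsys. Qed.
Lemma phi_irr i j (H H' : le j i) x : phi i j H x = phi i j H' x.
Proof. rewrite (proof_irrelevance _ H H'). reflexivity. Qed.
Lemma le_refl i : le i i.
Proof. apply hdir. Qed.
Lemma le_trans i j k : le i j -> le j k -> le i k.
Proof. apply hdir. Qed.
Lemma le_ub i j : exists k, le i k /\ le j k.
Proof. apply hdir. Qed.
Lemma I_ne : exists i : I, True.
Proof. apply hdir. Qed.

Lemma phi_sim i j (H : le j i) a b : sim i a b <-> sim j (phi i j H a) (phi i j H b).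
Proof. apply homij. Qed.

Lemma sim_all x y : Lc x -> Lc y -> forall i, sim i (x i) (y i) -> forall k, sim k (x k) (y k).
Proof.
  intros hx hy i hi k. destruct (le_ub i k) as [m [him hkm]].
  rewrite <- (hx m k hkm), <- (hy m k hkm). apply (phi_sim m k hkm).
  apply (phi_sim m i him). rewrite hx, hy. exact hi.
Qed.

Lemma nsim_all x y : Lc x -> Lc y -> ~ (forall i, sim i (x i) (y i)) -> forall i, ~ sim i (x i) (y i).
Proof. intros hx hy h i hi. apply h. apply (sim_all x y hx hy i hi). Qed.

Lemma surj_proj j (y : X j) : exists x, Lc x /\ x j = y.
Proof.
  destruct hcof as [s [smono scof]].
  destruct (scof j) as [n0 Hj0].
  pose (t := fun n => s (n + n0)).
  assert (tmono : forall n, le (t n) (t (S n))) by (intro n; apply smono).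
  assert (tmono2 : forall m k, le (t m) (t (k + m))).
  { intros m k; induction k as [|k IH]. apply le_refl. eapply le_trans. apply IH. apply tmono. }
  pose (liftf := fun i j (H : le j i) (z : X j) => proj1_sig (constructive_indefinite_description _ (hsurj i j H z))).
  assert (liftf_spec : forall i j H z, phi i j H (liftf i j H z) = z).
  { intros. unfold liftf. destruct (constructive_indefinite_description _ _) as [xx hxx]. exact hxx. }
  pose (w := fix w (n : nat) : X (t n) := match n as n0 return X (t n0) with
     | 0 => liftf (t 0) j Hj0 y
     | S m => liftf (t (S m)) (t m) (tmono m) (w m) end).
  assert (wcomp : forall m k (H : le (t m) (t (k + m))), phi _ _ H (w (k + m)) = w m).
  { intros m k; induction k as [|k IH]; intros H.
    - simpl. apply hsys.
    - rewrite <- (IH (tmono2 m k)).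
      rewrite <- (phi_comp _ _ _ (tmono (k + m)) (tmono2 m k) H).
      simpl. rewrite liftf_spec. reflexivity. }
  assert (wcomp2 : forall i n m (Hn : le i (t n)) (Hm : le i (t m)),
             phi _ _ Hn (w n) = phi _ _ Hm (w m)).
  { intros i n m Hn Hm.
    assert (gen : forall n m (Hn : le i (t n)) (Hm : le i (t m)), m <= n -> phi _ _ Hn (w n) = phi _ _ Hm (w m)).
    { clear n m Hn Hm. intros n m Hn Hm hmn.
      destruct (Nat.le_exists_sub m n hmn) as [k [-> _]].
      rewrite <- (wcomp m k (tmono2 m k)).
      symmetry. apply phi_comp. }
    destruct (Nat.le_ge_cases m n); [apply gen; auto | symmetry; apply gen; auto]. }
  assert (tcof : forall i, exists n, le i (t n)).
  { intros i. destruct (scof i) as [n hn]. exists n. eapply le_trans. apply hn.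
    assert (h := tmono2 0 n). unfold t in h |- *. rewrite Nat.add_0_r in h.
    clear h.
    assert (hh : forall k m, le (s m) (s (k + m))).
    { intros k m; induction k as [|k IH]. apply le_refl. eapply le_trans. apply IH. apply smono. }
    rewrite Nat.add_comm. apply hh. }
  pose (nidx := fun i => constructive_indefinite_description _ (tcof i)).
  exists (fun i => phi _ _ (proj2_sig (nidx i)) (w (proj1_sig (nidx i)))).
  split.
  - intros i k H. rewrite phi_comp with (Hik := le_trans _ _ _ H (proj2_sig (nidx i))).
    apply wcomp2.
  - rewrite (wcomp2 j _ 0 _ Hj0). simpl. apply liftf_spec.
Qed.

Lemma three_L : exists a b c, Lc a /\ Lc b /\ Lc c /\
     (forall i, ~ sim i (a i) (b i)) /\ (forall i, ~ sim i (a i) (c i)) /\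
     (forall i, ~ sim i (b i) (c i)).
Proof.
  destruct I_ne as [j _].
  destruct (g_three _ _ (LMSi j)) as [a [b [c [h1 [h2 h3]]]]].
  destruct (surj_proj j a) as [A [hA hAj]].
  destruct (surj_proj j b) as [B [hB hBj]].
  destruct (surj_proj j c) as [C [hC hCj]].
  exists A, B, C. repeat split; auto; intros i hi.
  - apply h1. rewrite <- hAj, <- hBj. exact (sim_all _ _ hA hB i hi j).
  - apply h2. rewrite <- hAj, <- hCj. exact (sim_all _ _ hA hC i hi j).
  - apply h3. rewrite <- hBj, <- hCj. exact (sim_all _ _ hB hC i hi j).
Qed.

Definition Y := {x : forall i, X i | Lc x}.
Definition simY (a b : Y) : Prop := forall i, sim i (proj1_sig a i) (proj1_sig b i).
Definition V (a : Y) (g : Y -> Y) : Prop :=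
  exists u : forall i, X i -> X i, (forall i, U i (proj1_sig a i) (u i)) /\ comp_fam u /\
     (forall b i, proj1_sig (g b) i = u i (proj1_sig b i)).

Lemma Yeq (a b : Y) : (forall i, proj1_sig a i = proj1_sig b i) -> a = b.
Proof.
  destruct a as [a ha], b as [b hb]; simpl; intro h.
  assert (a = b) by (apply functional_extensionality_dep; exact h). subst.
  f_equal. apply proof_irrelevance.
Qed.

Lemma comp_Lc u (hu : comp_fam u) b : Lc b -> Lc (fun i => u i (b i)).
Proof. intros hb i j H. rewrite hu, hb. reflexivity. Qed.

Definition mapY u (hu : comp_fam u) (b : Y) : Y :=
  exist _ (fun i => u i (proj1_sig b i)) (comp_Lc u hu _ (proj2_sig b)).

Lemma mapY_V (a : Y) u (hu : comp_fam u) : (forall i, U i (proj1_sig a i) (u i)) -> V a (mapY u hu).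
Proof. intros h. exists u. repeat split; auto. Qed.

Lemma nsimY a b : ~ simY a b -> forall i, ~ sim i (proj1_sig a i) (proj1_sig b i).
Proof. intros h. apply nsim_all; try apply proj2_sig. exact h. Qed.

Definition canonF (a b c : forall i, X i) : forall i, X i -> X i :=
  fun i => canon (U i) (a i) (b i) (c i).

Lemma canonF_comp a b c : Lc a -> Lc b -> Lc c ->
  (forall i, ~ sim i (a i) (b i)) -> (forall i, ~ sim i (a i) (c i)) -> comp_fam (canonF a b c).
Proof.
  intros ha hb hc hab hac i j H w. unfold canonF.
  destruct (homij i j H) as [_ hr].
  destruct (canon_spec _ _ (LMSi i) _ _ _ (hab i) (hac i)) as [hU hv].
  destruct (hr _ _ hU) as [v [hv1 hv2]].
  rewrite ha in hv1. rewrite hv2.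
  apply (canon_uniq _ _ (LMSi j)); auto.
  rewrite <- (hb i j H), <- hv2, hv, hc. reflexivity.
Qed.

Lemma Y_nsim (x : Y) : exists z, ~ simY x z.
Proof.
  destruct three_L as [a [b [c [ha [hb [hc [h1 [h2 h3]]]]]]]].
  pose (A := exist _ a ha : Y). pose (B := exist _ b hb : Y).
  destruct (classic (simY x A)) as [hx|hx]; [|eauto].
  exists B. intro hB. destruct I_ne as [i _]. apply (h1 i).
  apply (g_trans _ _ (LMSi i)) with (proj1_sig x i); [apply (g_sym _ _ (LMSi i))|]; auto.
Qed.
Lemma Y_equiv : equivalence simY.
Proof.
  split; [|split].
  - intros x i. apply (g_refl _ _ (LMSi i)).
  - intros x y h i. apply (g_sym _ _ (LMSi i)), h.
  - intros x y z h1 h2 i. apply (g_trans _ _ (LMSi i)) with (proj1_sig y i); auto.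
Qed.

Lemma Y_three : more_than_two_classes simY.
Proof.
  destruct three_L as [a [b [c [ha [hb [hc [h1 [h2 h3]]]]]]]].
  destruct I_ne as [i _].
  exists (exist _ a ha), (exist _ b hb), (exist _ c hc).
  repeat split; intro h; [apply (h1 i)|apply (h2 i)|apply (h3 i)]; apply h.
Qed.

Lemma Y_sub x : subgroup_Sym simY (V x).
Proof.
  split; [|split; [|split]].
  - exists (fun i z => z). repeat split; intros; try reflexivity.
    apply (g_id _ _ (LMSi _)).
  - intros g h [u [hu1 [hu2 hu3]]] [v [hv1 [hv2 hv3]]].
    exists (fun i z => v i (u i z)). repeat split.
    + intro i. apply (g_mul _ _ (LMSi i)); auto.
    + intros i j H w. rewrite hv2, hu2. reflexivity.
    + intros b i. rewrite hv3, hu3. reflexivity.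
  - intros g [u [hu1 [hu2 hu3]]].
    assert (hinv : forall i, exists h, U i (proj1_sig x i) h /\ forall z, h (u i z) = z /\ u i (h z) = z).
    { intro i. apply (g_inv _ _ (LMSi i)), hu1. }
    pose (hf := fun i => proj1_sig (constructive_indefinite_description _ (hinv i))).
    assert (hfs : forall i, U i (proj1_sig x i) (hf i) /\ forall z, hf i (u i z) = z /\ u i (hf i z) = z).
    { intro i. unfold hf. destruct (constructive_indefinite_description _ _) as [h' hh']. exact hh'. }
    assert (hc : comp_fam hf).
    { intros i j H w.
      assert (e : u j (phi i j H (hf i w)) = phi i j H w).
      { rewrite <- hu2. f_equal. apply hfs. }
      rewrite <- e. symmetry. apply hfs. }
    exists (mapY hf hc). split.
    + apply mapY_V. intro i. apply hfs.
    + intro z. split; apply Yeq; intro i; simpl.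
      * rewrite hu3. apply hfs.
      * rewrite hu3. simpl. apply hfs.
  - intros g [u [hu1 [hu2 hu3]]] a b. split; intros h i.
    + rewrite !hu3. apply (proj1 (g_pres _ _ (LMSi i) _ _ (hu1 i) _ _)), h.
    + apply (proj2 (g_pres _ _ (LMSi i) _ _ (hu1 i) _ _)). rewrite <- !hu3. apply h.
Qed.

Lemma Y_LM0dir x y : simY x y -> forall u, V x u -> exists v, V y v /\ forall z, simY (u z) (v z).
Proof.
  intros hxy g hg. pose proof hg as [u [hu1 [hu2 hu3]]].
  destruct (Y_nsim x) as [z hz].
  pose (t := g z).
  assert (nxz := nsimY _ _ hz).
  assert (nxt : forall i, ~ sim i (proj1_sig x i) (proj1_sig t i)).
  { intros i h. apply (nxz i). unfold t in h. rewrite hu3 in h.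
    rewrite <- (g_fix _ _ (LMSi i) _ _ (hu1 i)) in h.
    apply (proj2 (g_pres _ _ (LMSi i) _ _ (hu1 i) _ _)) in h. exact h. }
  assert (nyz : forall i, ~ sim i (proj1_sig y i) (proj1_sig z i)).
  { intros i h. apply (nxz i). apply (g_trans _ _ (LMSi i)) with (proj1_sig y i); auto. }
  assert (nyt : forall i, ~ sim i (proj1_sig y i) (proj1_sig t i)).
  { intros i h. apply (nxt i). apply (g_trans _ _ (LMSi i)) with (proj1_sig y i); auto. }
  assert (hc := canonF_comp _ _ _ (proj2_sig y) (proj2_sig z) (proj2_sig t) nyz nyt).
  exists (mapY _ hc). split.
  - apply mapY_V. intro i. apply (canon_spec _ _ (LMSi i)); auto.
  - intros w i. simpl. rewrite hu3. unfold canonF.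
    destruct (g_LM0 _ _ (LMSi i) _ _ (hxy i) _ (hu1 i)) as [vs [hvs1 hvs2]].
    destruct (g_sharp' _ _ (LMSi i) _ _ _ (nyz i) (nyt i)) as [u0 [_ [_ hun]]].
    destruct (canon_spec _ _ (LMSi i) _ _ _ (nyz i) (nyt i)) as [hc1 hc2].
    apply (g_trans _ _ (LMSi i)) with (vs (proj1_sig w i)); [apply hvs2|].
    apply (g_trans _ _ (LMSi i)) with (u0 (proj1_sig w i)).
    + apply hun; auto. apply (g_sym _ _ (LMSi i)).
      unfold t. rewrite hu3. apply hvs2.
    + apply (g_sym _ _ (LMSi i)). apply hun; auto. rewrite hc2. apply (g_refl _ _ (LMSi i)).
Qed.
Lemma Y_fix x u : V x u -> u x = x.
Proof.
  intros [uf [h1 [h2 h3]]]. apply Yeq. intro i. rewrite h3. apply (g_fix _ _ (LMSi i)), h1.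
Qed.

Lemma Y_sharp_gen x y z : ~ simY x y -> ~ simY x z ->
  exists uf (hc : comp_fam uf), (forall i, U i (proj1_sig x i) (uf i)) /\
   mapY uf hc y = z /\
   (forall i, forall u', U i (proj1_sig x i) u' -> u' (proj1_sig y i) = proj1_sig z i ->
       forall w, u' w = uf i w) /\
   (forall i, forall u', U i (proj1_sig x i) u' -> sim i (u' (proj1_sig y i)) (proj1_sig z i) ->
       forall w, sim i (u' w) (uf i w)).
Proof.
  intros hy hz. assert (ny := nsimY _ _ hy). assert (nz := nsimY _ _ hz).
  assert (hc := canonF_comp _ _ _ (proj2_sig x) (proj2_sig y) (proj2_sig z) ny nz).
  exists _, hc. split; [|split; [|split]].
  - intro i. apply (canon_spec _ _ (LMSi i)); auto.
  - apply Yeq. intro i. simpl. apply (canon_spec _ _ (LMSi i)); auto.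
  - intros i u' hu' e w. apply (canon_uniq _ _ (LMSi i)); auto.
  - intros i u' hu' e w. unfold canonF.
    destruct (g_sharp' _ _ (LMSi i) _ _ _ (ny i) (nz i)) as [u0 [_ [_ hun]]].
    destruct (canon_spec _ _ (LMSi i) _ _ _ (ny i) (nz i)) as [hc1 hc2].
    apply (g_trans _ _ (LMSi i)) with (u0 w); [apply hun; auto|].
    apply (g_sym _ _ (LMSi i)). apply hun; auto. rewrite hc2. apply (g_refl _ _ (LMSi i)).
Qed.

Lemma Y_sharp x y z : ~ simY x y -> ~ simY x z ->
     exists u, V x u /\ u y = z /\
       forall u', V x u' -> u' y = z -> forall w, u' w = u w.
Proof.
  intros hy hz. destruct (Y_sharp_gen x y z hy hz) as [uf [hc [h1 [h2 [h3 _]]]]].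
  exists (mapY uf hc). split; [apply mapY_V; auto|split; auto].
  intros u' [vf [hv1 [hv2 hv3]]] e w. apply Yeq. intro i. rewrite hv3. simpl.
  apply h3; auto. rewrite <- hv3, e. reflexivity.
Qed.

Lemma Y_sharp' x y z : ~ simY x y -> ~ simY x z ->
     exists u, V x u /\ simY (u y) z /\
       forall u', V x u' -> simY (u' y) z -> forall w, simY (u' w) (u w).
Proof.
  intros hy hz. destruct (Y_sharp_gen x y z hy hz) as [uf [hc [h1 [h2 [_ h4]]]]].
  exists (mapY uf hc). split; [apply mapY_V; auto|split].
  - rewrite h2. apply (proj1 Y_equiv).
  - intros u' [vf [hv1 [hv2 hv3]]] e w i. rewrite hv3. simpl.
    apply h4; auto. rewrite <- hv3. apply e.
Qed.

Lemma Y_gen g : gen_group V g -> exists gf, (forall i, gen_group (U i) (gf i)) /\ comp_fam gf /\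
   (forall b i, proj1_sig (g b) i = gf i (proj1_sig b i)).
Proof.
  induction 1 as [|y u g hu hg [gf [h1 [h2 h3]]]].
  - exists (fun i z => z). repeat split; intros; try reflexivity. constructor.
  - destruct hu as [uf [hu1 [hu2 hu3]]].
    exists (fun i z => gf i (uf i z)). split; [|split].
    + intro i. econstructor; eauto.
    + intros i j H w. rewrite h2, hu2. reflexivity.
    + intros b i. rewrite h3, hu3. reflexivity.
Qed.

Lemma Y_LM2 x g ginv : gen_group V g ->
     (forall z, ginv (g z) = z /\ g (ginv z) = z) ->
     forall u, V (g x) u <-> exists v, V x v /\ forall z, u z = g (v (ginv z)).
Proof.
  intros hg hinv u.
  destruct (Y_gen g hg) as [gf [hg1 [hg2 hg3]]].
  assert (hex : forall i, exists h, forall z, h (gf i z) = z /\ gf i (h z) = z).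
  { intro i. apply (g_gen_inv _ _ (LMSi i)), hg1. }
  pose (hf := fun i => proj1_sig (constructive_indefinite_description _ (hex i))).
  assert (hfs : forall i z, hf i (gf i z) = z /\ gf i (hf i z) = z).
  { intro i. unfold hf. destruct (constructive_indefinite_description _ _) as [h' hh']. exact hh'. }
  assert (hfc : comp_fam hf).
  { intros i j H w.
    assert (e : gf j (phi i j H (hf i w)) = phi i j H w).
    { rewrite <- hg2. f_equal. apply hfs. }
    rewrite <- e. symmetry. apply hfs. }
  assert (ginvc : forall b i, proj1_sig (ginv b) i = hf i (proj1_sig b i)).
  { intros b i. rewrite <- (proj1 (hfs i (proj1_sig (ginv b) i))). rewrite <- hg3.
    rewrite (proj2 (hinv b)). reflexivity. }
  split.
  - intros [uf [hu1 [hu2 hu3]]].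
    pose (vf := fun i w => hf i (uf i (gf i w))).
    assert (hvc : comp_fam vf).
    { intros i j H w. unfold vf. rewrite hfc, hu2, hg2. reflexivity. }
    exists (mapY vf hvc). split.
    + apply mapY_V. intro i.
      specialize (hu1 i). rewrite hg3 in hu1.
      apply (g_LM2 _ _ (LMSi i) _ _ _ (hg1 i) (hfs i)) in hu1.
      destruct hu1 as [v [hv1 hv2]].
      replace (vf i) with v; auto.
      apply functional_extensionality. intro w. unfold vf.
      rewrite hv2, (proj1 (hfs i w)), (proj1 (hfs i _)). reflexivity.
    + intro z. apply Yeq. intro i. rewrite hg3. simpl. rewrite ginvc. unfold vf.
      rewrite (proj2 (hfs i _)), (proj2 (hfs i _)). apply hu3.
  - intros [v [[vf [hv1 [hv2 hv3]]] hv]].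
    exists (fun i w => gf i (vf i (hf i w))). split; [|split].
    + intro i. rewrite hg3.
      apply (g_LM2 _ _ (LMSi i) _ _ _ (hg1 i) (hfs i)).
      exists (vf i). split; auto.
    + intros i j H w. rewrite hg2, hv2, hfc. reflexivity.
    + intros b i. rewrite hv, hg3, hv3, ginvc. reflexivity.
Qed.

Lemma Y_LMS : is_LMS simY V.
Proof.
  split; [exact Y_equiv|]. split; [exact Y_three|]. split; [exact Y_sub|].
  split; [|split; [exact Y_fix|split; [exact Y_sharp|split; [|split; [exact Y_sharp'|exact Y_LM2]]]]].
  - intros x y h. split.
    + apply Y_LM0dir; auto.
    + intros v hv. destruct (Y_LM0dir y x (proj1 (proj2 Y_equiv) _ _ h) v hv) as [u [hu1 hu2]].
      exists u. split; auto. intro z. apply (proj1 (proj2 Y_equiv)), hu2.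
  - intros x u hu. rewrite (Y_fix x u hu). apply (proj1 Y_equiv).
Qed.
Definition piY (i : I) (y : Y) : X i := proj1_sig y i.

Lemma Y_cone : is_cone le X sim U phi simY V piY.
Proof.
  split; [exact Y_LMS|split].
  - intro i. split.
    + intros a b. split; [intro h; apply h|].
      intros h k. exact (sim_all _ _ (proj2_sig a) (proj2_sig b) i h k).
    + intros x u [uf [h1 [h2 h3]]]. exists (uf i). split; auto. intro z. apply h3.
  - intros i j H z. unfold piY. apply (proj2_sig z).
Qed.

Lemma Y_univ (Z : Type) (simZ : Z -> Z -> Prop) (W : Z -> (Z -> Z) -> Prop)
           (psi : forall i, Z -> X i) :
      is_cone le X sim U phi simZ W psi ->
      exists theta : Z -> Y,
        is_LMS_hom simZ W simY V theta /\
        (forall i z, piY i (theta z) = psi i z) /\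
        (forall theta' : Z -> Y, is_LMS_hom simZ W simY V theta' ->
           (forall i z, piY i (theta' z) = psi i z) -> forall z, theta' z = theta z).
Proof.
  intros [hZ [hpsi hcomm]].
  assert (hLc : forall z, Lc (fun i => psi i z)) by (intros z i j H; apply hcomm).
  exists (fun z => exist _ _ (hLc z)). split; [split|split].
  - intros z z'. split.
    + intros h i. simpl. apply (hpsi i), h.
    + intros h. destruct I_ne as [i _]. apply (hpsi i), h.
  - intros z w hw.
    destruct (g_nsim _ _ hZ z) as [z0 hz0].
    assert (hwz0 : ~ simZ z (w z0)).
    { intro h. apply hz0. rewrite <- (g_fix _ _ hZ _ _ hw) in h.
      apply (proj2 (g_pres _ _ hZ _ _ hw _ _)) in h. exact h. }
    assert (n1 : forall i, ~ sim i (psi i z) (psi i z0)) by (intros i h; apply hz0, (hpsi i), h).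
    assert (n2 : forall i, ~ sim i (psi i z) (psi i (w z0))) by (intros i h; apply hwz0, (hpsi i), h).
    assert (hc := canonF_comp _ _ _ (hLc z) (hLc z0) (hLc (w z0)) n1 n2).
    exists (mapY _ hc). split.
    + apply mapY_V. intro i. apply (canon_spec _ _ (LMSi i)); auto.
    + intro z'. apply Yeq. intro i. simpl. unfold canonF.
      destruct (proj2 (hpsi i) z w hw) as [v [hv1 hv2]].
      rewrite hv2. apply (canon_uniq _ _ (LMSi i)); auto.
  - intros i z. reflexivity.
  - intros theta' _ h z. apply Yeq. intro i. apply h.
Qed.

Lemma limit_exists : inverse_limit_exists le X sim U phi.
Proof.
  exists Y, simY, V, piY. split; [exact Y_cone|exact Y_univ].
Qed.

End Main.

Theorem mainTheorem13 (I : Type) (le : I -> I -> Prop) (X : I -> Type)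
  (sim : forall i, X i -> X i -> Prop) (U : forall i, X i -> (X i -> X i) -> Prop)
  (phi : forall i j, le j i -> X i -> X j)
  (hdir : directed_set le)
  (hsys : inverse_system le X sim U phi)
  (hsurj : forall i j (H : le j i) (y : X j), exists x : X i, phi i j H x = y)
  (hcof : has_cofinal_sequence le) :
  let L := fun x : (forall i, X i) => forall i j (H : le j i), phi i j H (x i) = x j in
  (forall j (y : X j), exists x, L x /\ x j = y) /\
  (forall x y, L x -> L y ->
     ((exists i, sim i (x i) (y i)) <-> (forall i, sim i (x i) (y i)))) /\
  (exists a b c, L a /\ L b /\ L c /\
     ~ (exists i, sim i (a i) (b i)) /\ ~ (exists i, sim i (a i) (c i)) /\
     ~ (exists i, sim i (b i) (c i))) /\
  inverse_limit_exists le X sim U phi.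
Proof.
  intros L. split; [|split; [|split]].
  - exact (surj_proj I le X sim U phi hdir hsys hsurj hcof).
  - intros x y hx hy. split.
    + intros [i hi]. exact (sim_all I le X sim U phi hdir hsys x y hx hy i hi).
    + intros h. destruct (I_ne I le hdir) as [i _]. exists i. apply h.
  - destruct (three_L I le X sim U phi hdir hsys hsurj hcof) as [a [b [c [ha [hb [hc [h1 [h2 h3]]]]]]]].
    exists a, b, c. repeat split; auto; intros [i hi]; eauto.
    + exact (h1 i hi).
    + exact (h2 i hi).
    + exact (h3 i hi).
  - exact (limit_exists I le X sim U phi hdir hsys hsurj hcof).
Qed.
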